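(* Let $G$ be a complete edge-colored graph such that the quotient graph $G[M]/\mathbb{P}_{\max}(M)$ of each strong prime module $M$ of $G$ is a complete edge-colored permutation graph. Then $G$ is a complete edge-colored permutation graph.
   Context: A complete $k$-edge-colored graph $G=(V,E_1,\dots,E_k)$ is the complete graph on a finite set $V$ with edges partitioned into $k$ nonempty color classes $E_i$ (the one-vertex graph also counts); $G_{|i}=(V,E_i)$. A labeling is a bijection $\ell:V\to\{1,\dots,|V|\}$. A graph $(V,E)$ with labeling $\ell$ is a simple permutation graph of a permutation $\pi$ if for all $u,v$ with $\ell(u)>\ell(v)$: $\{u,v\}\in E$ iff $\pi^{-1}(\ell(u))<\pi^{-1}(\ell(v))$. $G$ is a complete edge-colored permutation graph if there exist a labeling $\ell$ and permutations $\pi_1,\dots,\pi_k$ with $(G_{|i},\ell)$ a simple permutation graph of $\pi_i$ for all $i$. A module is a set $M\subseteq V$ such that for every $v\notin M$ all edges $\{u,v\}$, $u\in M$, have the same color; a strong module is a nonempty module comparable by inclusion or disjoint with every other module. For a strong module $M$ with $|M|\ge2$, $\mathbb{P}_{\max}(M)$ is the set of inclusion-maximal strong modules properly contained in $M$, and $G[M]/\mathbb{P}_{\max}(M)$ is the complete graph on $\mathbb{P}_{\max}(M)$ with $\{M_a,M_b\}$ colored by the common color of all edges between $M_a$ and $M_b$; for $|M|=1$ it is the one-vertex graph. A strong module is series if its quotient graph has at least two vertices and all its edges have one color, and prime otherwise. *)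

(* Defs.v *)
From mathcomp Require Import all_boot.
From mathcomp Require Import fingroup perm.
Set Implicit Arguments.
Unset Strict Implicit.
Unset Printing Implicit Defensive.

(* A complete edge-colored graph on a finite vertex type T with colors 'I_k is
   given by a color function c : T -> T -> 'I_k; only its values c u v with
   u != v matter (the color of the edge {u,v}), and c is required to be
   symmetric on such pairs. *)

Definition symmetric_coloring (T : finType) (k : nat) (c : T -> T -> 'I_k) :=
  forall u v : T, u != v -> c u v = c v u.

Definition colors_used (T : finType) (k : nat) (c : T -> T -> 'I_k) :=
  1 < #|T| -> forall i : 'I_k, exists u v : T, u != v /\ c u v = i.

(* Complete edge-colored permutation graph, stated for a graph given by its
   color classes E i (E i u v : "{u,v} is an edge of color i"): a labeling
   l : T -> {0,..,n-1} (bijective; 0-based version of {1..n}) and permutations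
   pi_i of the labels such that for all u v with l u > l v:
   {u,v} \in E_i iff pi_i^-1 (l u) < pi_i^-1 (l v). *)
Definition is_cepg_rel (T : finType) (k : nat) (E : 'I_k -> T -> T -> bool)
  : Prop :=
  exists l : T -> 'I_#|T|, bijective l /\
    exists pi : 'I_k -> {perm 'I_#|T|},
      forall (i : 'I_k) (u v : T), l v < l u ->
        (E i u v <-> ((pi i)^-1)%g (l u) < ((pi i)^-1)%g (l v)).

Definition color_class (T : finType) (k : nat) (c : T -> T -> 'I_k) :
  'I_k -> T -> T -> bool := fun i u v => c u v == i.

Definition is_cepg (T : finType) (k : nat) (c : T -> T -> 'I_k) : Prop :=
  is_cepg_rel (color_class c).

Section Modules.
Variables (T : finType) (k : nat) (c : T -> T -> 'I_k).

Definition is_module (M : {set T}) : bool :=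
  [forall v, (v \notin M) ==>
     [forall u in M, [forall u' in M, c u v == c u' v]]].

Definition is_strong_module (M : {set T}) : bool :=
  [&& M != set0, is_module M &
    [forall N : {set T}, is_module N ==>
       [|| N \subset M, M \subset N | [disjoint N & M]]]].

Definition Pmax (M : {set T}) : {set {set T}} :=
  [set N : {set T} | [&& is_strong_module N, N \proper M &
     [forall N' : {set T},
        [&& is_strong_module N', N' \proper M & N \subset N'] ==> (N' == N)]]].

(* The quotient graph G[M]/P_max(M): vertices are the elements of P_max(M),
   and {Ma,Mb} has color i iff the (common) color of the edges between Ma and
   Mb is i, i.e. iff some edge between Ma and Mb has color i. *)
Definition quotient_class (M : {set T}) :
  'I_k -> {X : {set T} | X \in Pmax M} -> {X : {set T} | X \in Pmax M} -> bool
  := fun i a b => [exists x in val a, exists y in val b, c x y == i].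

Definition is_series (M : {set T}) : Prop :=
  is_strong_module M /\ 2 <= #|M| /\ 2 <= #|Pmax M| /\
  exists i : 'I_k, forall Ma Mb, Ma \in Pmax M -> Mb \in Pmax M -> Ma != Mb ->
    [forall x in Ma, forall y in Mb, c x y == i].

Definition is_prime (M : {set T}) : Prop :=
  is_strong_module M /\ ~ is_series M.

End Modules.

Arguments quotient_class [T k] c M _ _ _.
Arguments Pmax [T k] c M.

(* Main.v *)
Require Import Defs.
From mathcomp Require Import all_boot.
From mathcomp Require Import fingroup perm.
From mathcomp Require Import zify.
From Stdlib Require Import Classical IndefiniteDescription.

Section S.
Variables (T : finType) (k : nat) (c : T -> T -> 'I_k).

Definition rep (M : {set T}) (l : T -> nat) (p : 'I_k -> T -> nat) :=
  [/\ {in M &, injective l}, (forall i, {in M &, injective (p i)}) &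
   (forall i u v, u \in M -> v \in M -> l v < l u -> (c u v == i) = (p i u < p i v))].

Definition brep M l p := rep M l p /\
  (forall u, u \in M -> l u < #|T| /\ forall i, p i u < #|T|).

Definition rk (M : {set T}) (f : T -> nat) u := #|[set w in M | f w < f u]|.

Lemma rk_lt (M : {set T}) (f : T -> nat) u v : u \in M -> v \in M -> (rk M f u < rk M f v) = (f u < f v).
Proof.
move=> uM vM; rewrite /rk; case: (ltnP (f u) (f v)) => h.
  apply: proper_card; rewrite properE; apply/andP; split.
    by apply/subsetP=> w; rewrite !inE => /andP[-> /ltn_trans]; apply.
  by apply/subsetPn; exists u; rewrite !inE ?uM ?h ?ltnn.
apply/negbTE; rewrite -leqNgt; apply: subset_leq_card.
by apply/subsetP=> w; rewrite !inE => /andP[-> /leq_trans]; apply.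
Qed.

Lemma rk_bound (M : {set T}) (f : T -> nat) u : rk M f u < #|T|.
Proof.
rewrite /rk -cardsT; apply: proper_card; rewrite properT.
apply/eqP=> e; have : u \in [set: T] by rewrite inE.
by rewrite -e !inE ltnn andbF.
Qed.

Lemma rk_inj (M : {set T}) (f : T -> nat) : {in M &, injective f} -> {in M &, injective (rk M f)}.
Proof.
move=> fi u v uM vM e; apply: fi => //.
have h1 := @rk_lt M f u v uM vM; have h2 := @rk_lt M f v u vM uM.
rewrite e ltnn in h1 h2; apply/eqP; rewrite eqn_leq.
by rewrite leqNgt -h2 leqNgt -h1.
Qed.

Lemma normalize (M : {set T}) l p : rep M l p -> brep M (rk M l) (fun i => rk M (p i)).
Proof.
case=> li pi H; split; last by move=> u _; split=> [|i]; apply: rk_bound.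
split; [exact: rk_inj | move=> i; exact: rk_inj |].
by move=> i u v uM vM; rewrite rk_lt // rk_lt //; apply: H.
Qed.

Lemma mod_const (A B : {set T}) x x' y y' : symmetric_coloring c ->
  is_module c A -> is_module c B ->
  [disjoint A & B] -> x \in A -> x' \in A -> y \in B -> y' \in B -> c x y = c x' y'.
Proof.
move=> sym /forallP mA /forallP mB dAB xA x'A yB y'B.
have yA : y \notin A by rewrite (disjointFl dAB yB).
have x'B : x' \notin B by rewrite disjoint_sym in dAB; rewrite (disjointFl dAB x'A).
have ne1 : x' != y by apply: contraNneq yA => <-.
have ne2 : x' != y' by apply: contraNneq x'B => ->.
have := mA y; rewrite yA /= => /forall_inP/(_ x xA)/forall_inP/(_ x' x'A)/eqP ->.
rewrite sym // [c x' y']sym //.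
by have := mB x'; rewrite x'B /= => /forall_inP/(_ y yB)/forall_inP/(_ y' y'B)/eqP ->.
Qed.

Lemma set1_strong x : is_strong_module c [set x].
Proof.
apply/and3P; split.
- by apply/set0Pn; exists x; rewrite inE.
- apply/forallP=> v; apply/implyP=> _; apply/forall_inP=> u; rewrite inE=>/eqP->.
  by apply/forall_inP=> u'; rewrite inE=>/eqP->.
- apply/forallP=> N; apply/implyP=> _; case: (boolP (x \in N)) => xN.
    by rewrite sub1set xN orbT.
  by rewrite disjoint_sym disjoints1 xN !orbT.
Qed.

Lemma PmaxP (M A : {set T}) : A \in Pmax c M -> [/\ is_strong_module c A, A \proper M &
  forall N, is_strong_module c N -> N \proper M -> A \subset N -> N = A].
Proof.
rewrite inE => /and3P[sA pA /forallP H]; split=> // N sN pN AN; apply/eqP.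
by move: (H N); rewrite sN pN AN.
Qed.

Lemma Pmax_disj (M A B : {set T}) x : A \in Pmax c M -> B \in Pmax c M -> x \in A -> x \in B -> A = B.
Proof.
case/PmaxP=> sA pA mA; case/PmaxP=> sB pB mB xA xB.
move: (sA) => /and3P[_ _ /forallP/(_ B)]; case/and3P: (sB) => _ -> _ /=.
case/or3P=> h; first by rewrite (mB A).
  by rewrite (mA B).
by move: (disjointFl h xA); rewrite xB.
Qed.

Lemma Pmax_cover (M : {set T}) x : 1 < #|M| -> x \in M -> exists2 A, A \in Pmax c M & x \in A.
Proof.
move=> cM xM.
pose Q N := [&& is_strong_module c N, N \proper M & x \in N].
have Q1 : Q [set x].
  by rewrite /Q set1_strong properEcard sub1set xM cards1 cM set11.
case: (arg_maxnP (fun N : {set T} => #|N|) Q1) => A /and3P[sA pA xA] maxA.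
exists A => //; rewrite inE sA pA /=; apply/forallP=> N; apply/implyP.
case/and3P=> sN pN AN; rewrite eq_sym eqEcard AN /=; apply: maxA.
by rewrite /Q sN pN (subsetP AN).
Qed.

Lemma lex (a b x y K : nat) : x < K -> y < K ->
  (a * K + x < b * K + y) = (a < b) || ((a == b) && (x < y)).
Proof.
move=> hx hy; case: (ltngtP a b) => h /=.
- apply/idP; nia.
- apply/negbTE; rewrite -leqNgt; nia.
- by rewrite h ltn_add2l.
Qed.

Lemma lex_eq (a b x y K : nat) : x < K -> y < K ->
  a * K + x = b * K + y -> a = b /\ x = y.
Proof.
move=> hx hy e; have h1 := @lex a b x y K hx hy; have h2 := @lex b a y x K hy hx.
rewrite e ltnn in h1 h2.
case: (ltngtP a b) h1 h2 => //= h _ _; subst b; split=> //; lia.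
Qed.

Definition qrep M (L : {set T} -> nat) (Q : 'I_k -> {set T} -> nat) :=
  [/\ {in Pmax c M &, injective L}, (forall i, {in Pmax c M &, injective (Q i)}) &
   forall i A B x y, A \in Pmax c M -> B \in Pmax c M -> x \in A -> y \in B ->
     L B < L A -> (c x y == i) = (Q i A < Q i B)].

Lemma compose (M : {set T}) : 1 < #|M| ->
  (forall A, A \in Pmax c M -> exists l p, brep A l p) ->
  (exists L Q, qrep M L Q) -> exists l p, rep M l p.
Proof.
move=> cM Hch [L [Q [Li Qi HQ]]].
have Hf : forall A, exists lp : (T -> nat) * ('I_k -> T -> nat),
    A \in Pmax c M -> brep A lp.1 lp.2.
  move=> A; case: (boolP (A \in Pmax c M)) => HA.
    by case: (Hch A HA) => l [p h]; exists (l, p).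
  by exists (fun _ => 0, fun _ _ => 0).
pose f A := proj1_sig (constructive_indefinite_description _ (Hf A)).
have fP A : A \in Pmax c M -> brep A (f A).1 (f A).2 :=
  proj2_sig (constructive_indefinite_description _ (Hf A)).
pose blk x := odflt set0 [pick A in Pmax c M | x \in A].
have blkP x : x \in M -> blk x \in Pmax c M /\ x \in blk x.
  move=> xM; rewrite /blk; case: pickP => [A /andP[]|] //= H.
  by case: (@Pmax_cover M x cM xM) => A HA xA; move: (H A); rewrite HA xA.
pose K := #|T|.
exists (fun u => L (blk u) * K + (f (blk u)).1 u).
exists (fun i u => Q i (blk u) * K + (f (blk u)).2 i u).
split.
- move=> u v uM vM /= e.
  case: (blkP u uM) => Au uA; case: (blkP v vM) => Av vA.
  case: (fP _ Au) => [[li _ _] bu]; case: (fP _ Av) => [_ bv].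
  have [h1 h2] := lex_eq _ _ _ _ _ (bu u uA).1 (bv v vA).1 e.
  have eb : blk u = blk v := Li _ _ Au Av h1.
  rewrite -eb in h2 vA; exact: li.
- move=> i u v uM vM /= e.
  case: (blkP u uM) => Au uA; case: (blkP v vM) => Av vA.
  case: (fP _ Au) => [[_ pi _] bu]; case: (fP _ Av) => [_ bv].
  have [h1 h2] := lex_eq _ _ _ _ _ ((bu u uA).2 i) ((bv v vA).2 i) e.
  have eb : blk u = blk v := Qi i _ _ Au Av h1.
  rewrite -eb in h2 vA; exact: (pi i).
- move=> i u v uM vM /=.
  case: (blkP u uM) => Au uA; case: (blkP v vM) => Av vA.
  case: (fP _ Au) => [[_ _ Hu] bu]; case: (fP _ Av) => [_ bv].
  case: (eqVneq (blk u) (blk v)) => eb.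
    rewrite -eb in vA *; rewrite !ltn_add2l; exact: Hu.
  have nL : L (blk v) != L (blk u).
    by apply: contra_neq eb => h; symmetry; apply: Li.
  have nQ : Q i (blk u) != Q i (blk v) by apply: contra_neq eb; apply: Qi.
  rewrite lex ?(bu u uA).1 ?(bv v vA).1 // (negbTE nL) orbF => lt.
  rewrite lex ?(bu u uA).2 ?(bv v vA).2 // (negbTE nQ) orbF.
  exact: HQ.
Qed.

Lemma series_qrep (M : {set T}) (i0 : 'I_k) :
  (forall Ma Mb, Ma \in Pmax c M -> Mb \in Pmax c M -> Ma != Mb ->
    [forall x in Ma, forall y in Mb, c x y == i0]) ->
  exists L Q, qrep M L Q.
Proof.
move=> H.
have [L0 [N [bd L0i]]] : exists (L0 : {set T} -> nat) N,
    (forall A, L0 A < N) /\ injective L0.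
  exists (fun A => val (enum_rank A)), #|{set T}|; split.
    by move=> A; exact: ltn_ord.
  by move=> A B /val_inj/enum_rank_inj.
exists L0.
exists (fun j A => if j == i0 then N - L0 A else L0 A).
split.
- by move=> A B _ _ /L0i.
- move=> j A B _ _ /=; have := bd A; have := bd B.
  by case: (j == i0) => hA hB e; apply: L0i; lia.
- move=> j A B x y HA HB xA yB lt.
  have AB : A != B by apply: contraTneq lt => ->; rewrite ltnn.
  have := H A B HA HB AB => /forall_inP/(_ x xA)/forall_inP/(_ y yB)/eqP ->.
  have := bd A; have := bd B.
  case: (eqVneq j i0) => [_|ne] hA hB.
    by symmetry; apply/idP; lia.
  by symmetry; apply/negbTE; rewrite -leqNgt ltnW.
Qed.

Lemma prime_qrep (M : {set T}) : symmetric_coloring c ->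
  is_cepg_rel (quotient_class c M) -> exists L Q, qrep M L Q.
Proof.
move=> sym [l0 [bl0 [pi Hpi]]].
pose sub (A : {set T}) : option {X : {set T} | X \in Pmax c M} := insub A.
have subE A (HA : A \in Pmax c M) : sub A = Some (exist _ A HA).
  exact: (insubT (fun X => X \in Pmax c M) HA).
exists (fun A => if sub A is Some s then val (l0 s) else 0).
exists (fun i A => if sub A is Some s then val ((pi i)^-1%g (l0 s)) else 0).
split.
- move=> A B HA HB; rewrite (subE A HA) (subE B HB) => /val_inj/(bij_inj bl0).
  by move=> /(congr1 val).
- move=> i A B HA HB; rewrite (subE A HA) (subE B HB) => /val_inj/perm_inj.
  by move=> /(bij_inj bl0) /(congr1 val).
- move=> i A B x y HA HB xA yB; rewrite (subE A HA) (subE B HB) => lt.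
  have := Hpi i _ _ lt => -[h1 h2]; apply/idP/idP => h.
    apply: h1; apply/existsP; exists x; rewrite xA /=; apply/existsP; exists y.
    by rewrite yB.
  have := h2 h; case/exists_inP=> x' x'A /exists_inP[y' y'B /eqP <-].
  have dAB : [disjoint A & B].
    rewrite disjoint_subset; apply/subsetP => z zA; rewrite inE; apply/negP => zB.
    have e := Pmax_disj _ _ _ _ HA HB zA zB.
    subst B; move: lt; have -> : (exist _ A HB : {X | X \in Pmax c M}) = exist _ A HA.
      by apply: val_inj.
    by rewrite ltnn.
  case: (PmaxP _ _ HA) => /and3P[_ mA _] _ _; case: (PmaxP _ _ HB) => /and3P[_ mB _] _ _.
  by rewrite (mod_const _ _ x x' y y' sym mA mB dAB xA x'A yB y'B).
Qed.

Lemma main_ind : symmetric_coloring c ->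
  (forall M, is_prime c M -> 2 <= #|M| -> is_cepg_rel (quotient_class c M)) ->
  forall M, is_strong_module c M -> exists l p, brep M l p.
Proof.
move=> sym Hp M; have [n] := ubnP #|M|; elim: n M => // n IH M ltMn sM.
case: (leqP #|M| 1) => cM.
  case/and3P: (sM) => /set0Pn[x xM] _ _.
  have e : M = [set x].
    by apply/eqP; rewrite eq_sym eqEcard sub1set xM cards1 cM.
  exists (fun _ => 0), (fun _ _ => 0); split; [split|].
  - by move=> u v; rewrite e !inE => /eqP-> /eqP->.
  - by move=> i u v; rewrite e !inE => /eqP-> /eqP->.
  - by move=> i u v _ _; rewrite ltnn.
  - by move=> u _; have h : 0 < #|T| by apply/card_gt0P; exists u.

have [l [p h]] : exists l p, rep M l p.
  apply: compose (cM) _ _.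
    move=> A HA; case: (PmaxP _ _ HA) => sA pA _; apply: IH sA.
    by have := proper_card pA; lia.
  case: (classic (is_series c M)) => [[_ [_ [_ [i0 H]]]]|ns].
    exact: series_qrep H.
  by apply: prime_qrep sym _; apply: Hp => //; split.
by exists (rk M l), (fun i => rk M (p i)); apply: normalize.
Qed.

End S.

Theorem proposition4p10 (T : finType) (k : nat) (c : T -> T -> 'I_k) :
  symmetric_coloring c -> colors_used c ->
  (forall M : {set T}, is_prime c M -> 2 <= #|M| ->
     is_cepg_rel (quotient_class c M)) ->
  is_cepg c.
Proof.
move=> sym _ Hp.
have [l [p [[li pi H] b]]] : exists l p, @brep T k c [set: T] l p.
  case: (boolP ([set: T] == set0)) => [/eqP e|ne].
    have nu : forall u : T, False by move=> u; have := in_setT u; rewrite e inE.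
    by exists (fun _ => 0), (fun _ _ => 0); split; [split|] => [u|i u|i u|u]; case: (nu u).
  apply: main_ind sym Hp _ _; apply/and3P; split => //.
    by apply/forallP=> v; rewrite inE.
  by apply/forallP => N; apply/implyP => _; rewrite subsetT.
pose lo u : 'I_#|T| := Ordinal (b u (in_setT u)).1.
have loi : injective lo.
  by move=> u v /(congr1 val) /= e; apply: li; rewrite ?inE.
have lob : bijective lo.
  by apply: (inj_card_bij loi); rewrite card_ord.
case: (lob) => g gK Kg.
pose sg i (j : 'I_#|T|) : 'I_#|T| := Ordinal ((b (g j) (in_setT _)).2 i).
have sgi i : injective (sg i).
  move=> j j' /(congr1 val) /= e.
  have := pi i _ _ (in_setT _) (in_setT _) e => /(congr1 lo).
  by rewrite !Kg.
exists lo; split => //.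
exists (fun i => ((perm (sgi i))^-1)%g) => i u v lt.
rewrite invgK !permE /sg /= !gK /color_class.
by rewrite (H i u v) ?inE.
Qed.
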